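(* Let $k\ge2$, $n>2^k$, $c=2^k-2$, and assume $d=\gcd(c,n-1)>1$; let $w=(n-1)/d$ and let $y_v=0$ if $v$ is a multiple of $d$ and $y_v=\frac{1}{w(d-1)}$ otherwise, for $v\in V=\{0,\dots,n-1\}$. Then for every $v\in V$ and every integer $1\le\ell\le n-1$, $$y([v\oplus\ell]_{n-1})=\frac{\ell-\lfloor\ell/d\rfloor}{w(d-1)}\quad\text{or}\quad y([v\oplus\ell]_{n-1})=\frac{\ell-\lceil\ell/d\rceil}{w(d-1)}.$$
   Context: For integers $u,\ell$ and $r\ge1$, $[u\oplus\ell]_r=\{w\bmod r: u\le w\le u+\ell-1\}$ (empty if $\ell\le0$). For $S\subseteq V$, $y(S)=\sum_{v\in S}y_v$. *)

(* Defs.v *)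
From mathcomp Require Import all_boot all_order all_algebra.
Set Implicit Arguments. Unset Strict Implicit. Unset Printing Implicit Defensive.
Import Order.TTheory GRing.Theory Num.Theory.

(* [u (+) l]_r = { w mod r : u <= w <= u + l - 1 }, viewed as a subset of
   V = {0,...,n-1} = 'I_n (empty if l = 0). *)
Definition cyc_interval (n u l r : nat) : {set 'I_n} :=
  [set x : 'I_n | has (fun w => w %% r == (x : nat)) (iota u l)].

Definition yvec (d w : nat) (v : nat) : rat :=
  if (d %| v)%N then 0%R else (1 / (w * (d - 1))%:R)%R.

Definition ysum (n d w : nat) (S : {set 'I_n}) : rat :=
  (\sum_(x in S) yvec d w x)%R.

Definition ceil_div (l d : nat) : nat := (l + d - 1) %/ d.

(* Main.v *)
Require Import Defs.
From mathcomp Require Import all_boot all_order all_algebra.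
From mathcomp Require Import zify.
Import Order.TTheory GRing.Theory Num.Theory.
Local Open Scope ring_scope.

Lemma count_iota0 (d N : nat) : (0 < d)%N ->
  count (fun w => d %| w)%N (iota 0 N) = ((N + d.-1) %/ d)%N.
Proof.
move=> d0; elim: N => [|N IH]; first by rewrite add0n divn_small // prednK.
rewrite -addn1 iotaD count_cat IH /= add0n addn0.
have -> : (N + 1 + d.-1 = N + d)%N by lia.
rewrite [((N + d) %/ d)%N]divnDr ?dvdnn // divnn d0 [((N + d.-1) %/ d)%N]divnD // [(d.-1 %/ d)%N]divn_small ?prednK //.
rewrite [(d.-1 %% d)%N]modn_small ?prednK // /dvdn.
have := ltn_pmod N d0.
case: (N %% d)%N => [|r] /=; lia.
Qed.

Lemma count_iota (d v l : nat) : (0 < d)%N ->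
  count (fun w => d %| w)%N (iota v l) = (l %/ d)%N \/
  count (fun w => d %| w)%N (iota v l) = ceil_div l d.
Proof.
move=> d0.
have E : count (fun w => d %| w)%N (iota v l) =
   (((v + l) + d.-1) %/ d - (v + d.-1) %/ d)%N.
  by rewrite -!count_iota0 // iotaD count_cat add0n; lia.
rewrite E /ceil_div.
have -> : (v + l + d.-1 = (v + d.-1) + l)%N by lia.
have -> : (l + d - 1 = l + d.-1)%N by lia.
rewrite divnD // [in X in _ \/ _ = X]divnD // [(d.-1 %/ d)%N]divn_small ?prednK //.
rewrite [(d.-1 %% d)%N]modn_small ?prednK //.
have ha := ltn_pmod (v + d.-1) d0; have hb := ltn_pmod l d0.
move: ((v + d.-1) %% d)%N ((v + d.-1) %/ d)%N (l %% d)%N (l %/ d)%N ha hb => a q b p ha hb.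
case: (leqP d (a + b)) => h1; case: (leqP d (b + d.-1)) => h2 /=; rewrite -?subn1 in h2 *. all: try (first [left; lia | right; lia]).
Qed.

Lemma sum_ifseq (s : seq nat) (P : pred nat) (a : rat) :
  \sum_(w <- s) (if P w then 0 else a) = (size s - count P s)%N%:R * a.
Proof.
elim: s => [|x s IH]; first by rewrite big_nil mul0r.
rewrite big_cons IH /=.
have := count_size P s.
case: (P x) => /= h; first by rewrite add0r add1n subSS.
rewrite add0n subSn // -addn1 natrD mulrDl mul1r addrC.
by [].
Qed.

Lemma sum_interval (n u l : nat) (F : nat -> rat) : (0 < n - 1)%N -> (l <= n - 1)%N ->
  \sum_(x in cyc_interval n u l (n - 1)) F x = \sum_(w <- iota u l) F (w %% (n - 1))%N.
Proof.
move=> m0 lm.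
rewrite -big_enum -(big_map (fun x : 'I_n => val x) xpredT F) -(big_map (fun w => w %% (n-1))%N xpredT F).
apply: perm_big; apply: uniq_perm.
- by rewrite map_inj_uniq ?enum_uniq //; apply: val_inj.
- rewrite map_inj_in_uniq ?iota_uniq // => w1 w2; rewrite !mem_iota => h1 h2 e.
  wlog le12 : w1 w2 h1 h2 e / (w1 <= w2)%N.
    move=> H; case: (leqP w1 w2) => h; first exact: H.
    by apply/esym/H => //; apply: ltnW.
  have [t et] : exists t, w2 = (w1 + t)%N by exists (w2 - w1)%N; lia.
  move: e; rewrite et => /eqP.
  rewrite -[X in (X %% _ == _)%N]addn0 eqn_modDl mod0n modn_small; last by lia.
  by move/eqP => <-; rewrite addn0.
- move=> i; apply/mapP/mapP.
  + case=> x; rewrite mem_enum inE => /hasP [w wI /eqP ew] ->.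
    by exists w => //; rewrite ew.
  + case=> w wI ->.
    have lt : ((w %% (n - 1)) < n)%N by have := ltn_pmod w m0; lia.
    exists (Ordinal lt) => //.
    rewrite mem_enum inE; apply/hasP; exists w => //.
Qed.

Theorem lemma3p2 (k n : nat) :
  (2 <= k)%N -> (2 ^ k < n)%N ->
  let c := (2 ^ k - 2)%N in
  let d := gcdn c (n - 1) in
  (1 < d)%N ->
  let w := ((n - 1) %/ d)%N in
  forall (v : 'I_n) (l : nat), (1 <= l <= n - 1)%N ->
    ysum d w (cyc_interval n v l (n - 1)) = (l - l %/ d)%N%:R / (w * (d - 1))%N%:R
    \/ ysum d w (cyc_interval n v l (n - 1)) = (l - ceil_div l d)%N%:R / (w * (d - 1))%N%:R.
Proof.
move=> hk hn c d d1 w v l /andP[l1 ln].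
have m0 : (0 < n - 1)%N by lia.
have dm : (d %| n - 1)%N by apply: dvdn_gcdr.
rewrite /ysum sum_interval //.
rewrite (eq_bigr (fun x => if (d %| x)%N then 0 else 1 / (w * (d - 1))%:R)); last first.
  by move=> x _; rewrite /yvec /dvdn modn_dvdm.
rewrite sum_ifseq size_iota.
have d0 : (0 < d)%N by lia.
by case: (count_iota d v l d0) => ->; [left | right]; rewrite mul1r.
Qed.
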